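(* Fix an integer $k\ge1$. Let $M$ be the set consisting of the empty composition together with all Fibonacci compositions of even numbers that start with $(1,2^{k-1})$. Let $Q$ be the free monoid (under concatenation) whose primes are the compositions $(1,2^l,1,2^{j})$ with $l\ge0$ and $0\le j\le k-2$ (so $Q$ contains only the empty composition when $k=1$). Then $M$ is a free monoid under concatenation whose primes are exactly the compositions of the form $(1,2^{k-1},2^i,q,1,2^j)$ with $i,j\ge0$ integers and $q\in Q$. Moreover, assigning weight $n$ to a composition of $2n$, the generating function of the primes of $M$ is $\dfrac{x^k}{1-3x+x^2+x^k}$, and $$1+\sum_{n\ge 0}F_{2n+2}x^{n+k}=1+\frac{x^k}{1-3x+x^2}=\Bigl(1-\frac{x^k}{1-3x+x^2+x^k}\Bigr)^{-1}.$$
   Context: A Fibonacci composition is a composition (finite sequence of positive integers) with all parts equal to $1$ or $2$; a Fibonacci composition of $n$ is one whose parts sum to $n$. $2^j$ denotes $j$ consecutive parts equal to $2$. A free monoid is one in which every element factors uniquely as a product of primes. The generating function of a set $S$ of compositions of even numbers is $\sum_{c\in S}x^{|c|/2}$, $|c|$ the sum of the parts. Fibonacci numbers: $F_0=0$, $F_1=1$, $F_n=F_{n-1}+F_{n-2}$. *)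

(* Defs.v *)
From mathcomp Require Import all_boot all_order all_algebra.
Set Implicit Arguments. Unset Strict Implicit. Unset Printing Implicit Defensive.
Import GRing.Theory Num.Theory.

(* Compositions are represented as seq nat (sequence of parts). *)

Definition fib_comp (s : seq nat) : bool := all (fun a => (a == 1) || (a == 2)) s.

Definition inM (k : nat) (s : seq nat) : Prop :=
  s = [::] \/
  (fib_comp s /\ ~~ odd (sumn s) /\ prefix (1 :: nseq (k - 1) 2) s).

Definition primeQ (k : nat) (p : seq nat) : Prop :=
  exists l j : nat, j.+2 <= k /\ p = 1 :: nseq l 2 ++ 1 :: nseq j 2.

Definition inQ (k : nat) (q : seq nat) : Prop :=
  exists ps : seq (seq nat), (forall p, p \in ps -> primeQ k p) /\ flatten ps = q.

Definition primeM (k : nat) (p : seq nat) : Prop :=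
  exists (i j : nat) (q : seq nat),
    inQ k q /\ p = 1 :: nseq (k - 1) 2 ++ nseq i 2 ++ q ++ 1 :: nseq j 2.

Definition irreducible (S : seq nat -> Prop) (p : seq nat) : Prop :=
  S p /\ p <> [::] /\
  (forall a b, S a -> S b -> p = a ++ b -> a = [::] \/ b = [::]).

Definition free_monoid (S : seq nat -> Prop) : Prop :=
  S [::] /\ (forall a b, S a -> S b -> S (a ++ b)) /\
  (forall s, S s -> exists! ps : seq (seq nat),
      (forall p, p \in ps -> irreducible S p) /\ flatten ps = s).

Definition card_is (P : seq nat -> Prop) (N : nat) : Prop :=
  exists l : seq (seq nat), uniq l /\ (forall c, c \in l <-> P c) /\ size l = N.

Fixpoint fib (n : nat) : nat :=
  match n with
  | 0 => 0
  | m.+1 => match m with 0 => 1 | p.+1 => fib m + fib p end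
  end.

Local Open Scope ring_scope.

(* Formal power series over int, represented by coefficient sequences;
   coefficient n of the Cauchy product. *)
Definition conv (f g : nat -> int) (n : nat) : int :=
  \sum_(i < n.+1) f i * g (n - i)%N.

Definition denom0 (n : nat) : int :=
  (n == 0)%N%:R - 3 * (n == 1)%N%:R + (n == 2)%N%:R.

Definition denomk (k n : nat) : int := denom0 n + (n == k)%:R.

Definition gfB (k n : nat) : int :=
  (n == 0)%:R + (if (k <= n)%N then (fib (2 * (n - k) + 2))%:Z else 0).

(* Main.v *)
Require Import Defs.
From mathcomp Require Import all_boot all_order all_algebra.
From mathcomp Require Import zify ring.
From Stdlib Require Import Classical_Prop.
Import GRing.Theory Num.Theory.
Set Implicit Arguments. Unset Strict Implicit. Unset Printing Implicit Defensive.

Definition P k : seq nat := 1 :: nseq (k - 1) 2.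
Definition inMb k (s : seq nat) : bool :=
  (s == [::]) || [&& fib_comp s, ~~ odd (sumn s) & prefix (P k) s].

Lemma inMP k s : inM k s <-> inMb k s.
Proof.
rewrite /inM /inMb; split.
- by case=> [->//|[a [b c]]]; rewrite a b c orbT.
- by case/orP=> [/eqP->|/and3P[a b c]]; [left|right].
Qed.

Lemma fib_comp_cat s t : fib_comp (s ++ t) = fib_comp s && fib_comp t.
Proof. by rewrite /fib_comp all_cat. Qed.

Lemma sumn_P k : 1 <= k -> sumn (P k) = (2 * k - 1)%N.
Proof. move=> hk; rewrite /P /= sumn_nseq; lia. Qed.

Lemma take_P_odd k m : 0 < m -> m <= k -> odd (sumn (take m (P k))).
Proof.
case: m => // m _ hm; rewrite /P /= take_nseq; last by lia.
by rewrite sumn_nseq /= oddD oddM.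
Qed.

Lemma size_P k : 1 <= k -> size (P k) = k.
Proof. by move=> hk; rewrite /P /= size_nseq; lia. Qed.

Lemma prefix_short k w p : 1 <= k -> prefix (P k) (w ++ p) -> size w <= k ->
  w = take (size w) (P k).
Proof.
move=> hk; rewrite prefixE size_P // => /eqP e hw.
by rewrite -e take_takel // take_size_cat.
Qed.

Lemma lunit k w p : 1 <= k -> inMb k (w ++ p) -> inMb k p -> inMb k w.
Proof.
move=> hk; case: p => [|x p]; first by rewrite cats0.
case: w => [//|y w].
rewrite /inMb => /orP[//|/and3P[f1 o1 p1]] /orP[//|/and3P[f2 o2 p2]].
apply/orP; right.
rewrite fib_comp_cat in f1; case/andP: f1 => -> _.
rewrite sumn_cat oddD in o1; move: o1; rewrite (negbTE o2) addbF => o1.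
rewrite o1 andTb.
case: (leqP k (size (y :: w))) => hs.
  by move: p1; rewrite !prefixE size_P // takel_cat.
have := prefix_short hk p1 (ltnW hs) => e.
by move: o1; rewrite {1}e take_P_odd // ltnW.
Qed.

Lemma inMb_cat k a b : inMb k a -> inMb k b -> inMb k (a ++ b).
Proof.
case: a => [//|x a]; case: b => [|y b]; first by rewrite cats0.
rewrite /inMb => /orP[//|/and3P[f1 o1 p1]] /orP[//|/and3P[f2 o2 p2]].
apply/orP; right; apply/and3P; split.
- by rewrite fib_comp_cat f1 f2.
- by rewrite sumn_cat oddD (negbTE o1) (negbTE o2).
- exact: prefix_catl.
Qed.

Fixpoint nsb k (b : bool) (r : seq nat) : bool :=
  if r is x :: r' then (b || ~~ prefix (P k) (x :: r')) && nsb k (b (+) odd x) r'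
  else true.

Lemma nsbE k b r : nsb k b r -> forall u v, r = u ++ v ->
  ~~ (b (+) odd (sumn u)) -> ~~ prefix (P k) v.
Proof.
elim: r b => [|x r IH] b /=.
  by move=> _ [|??] [|??] //= _; rewrite addbF => _; rewrite /P.
case/andP=> h1 h2 [|y u] v /=.
  by move=> <-; rewrite addbF; move: h1; case: (b)...
case=> <- e; rewrite oddD addbA; exact: IH.
Qed.

Lemma nsbI k b r : (forall u v, r = u ++ v ->
  ~~ (b (+) odd (sumn u)) -> ~~ prefix (P k) v) -> nsb k b r.
Proof.
elim: r b => [//|x r IH] b /= H.
apply/andP; split.
  case: b H => // H; exact: (H [::] (x :: r)).
apply: IH => u v e; rewrite -addbA -oddD; apply: (H (x :: u)); by rewrite e.
Qed.

Definition irrb k s := [&& s != [::], inMb k s & nsb k true (behead s)].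

Lemma head_M k s : inMb k s -> s != [::] -> exists s', s = 1 :: s'.
Proof.
case: s => [//|x s]; rewrite /inMb => /orP[//|/and3P[_ _]].
by rewrite /P /= => /andP[/eqP <- _] _; exists s.
Qed.

Lemma inMb_fib k s : inMb k s -> fib_comp s.
Proof. by case/orP=> [/eqP->//|/and3P[]]. Qed.

Lemma inMb_even k s : inMb k s -> ~~ odd (sumn s).
Proof. by case/orP=> [/eqP->//|/and3P[]]. Qed.

Lemma irrP k s : 1 <= k -> irreducible (inM k) s <-> irrb k s.
Proof.
move=> hk; rewrite /irreducible /irrb; split.
- case=> /inMP hM [hne H].
  have hne' : s != [::] by apply/eqP.
  rewrite hne' hM /=.
  case: (head_M hM hne') => s' es; rewrite es /=.
  apply: nsbI => u v e; rewrite addTb negbK => ou; apply/negP => pv.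
  have hv : inMb k v.
    apply/orP; right; apply/and3P; split => //.
    + by move: (inMb_fib hM); rewrite es e (_ : 1 :: u ++ v = (1::u) ++ v) // fib_comp_cat => /andP[].
    + move: (inMb_even hM); rewrite es e /= sumn_cat !oddD ou.
      by case: (odd (sumn v)).
  have hu : inMb k (1 :: u) by apply: (lunit hk _ hv); rewrite cat_cons -e -es.
  case: (H (1 :: u) v ((inMP _ _).2 hu) ((inMP _ _).2 hv)) => //.
  + by rewrite es e.
  + by move=> ev; move: pv; rewrite ev /P.
- case/and3P=> hne hM hn; split; first exact/inMP.
  split; first exact/eqP.
  move=> a b /inMP ha /inMP hb e.
  case: a ha e => [|y u] ha e; [by left | right].
  case: (head_M hM hne) => s' es.
  move: hn; rewrite es /=.
  move: e; rewrite es /= => -[ey e'] hn; subst y.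
  apply/eqP; apply: contraTT hn => bne.
  have pb : prefix (P k) b by move: hb; rewrite /inMb (negbTE bne) /= => /and3P[].
  apply/negP => hn; move: (nsbE hn e'); rewrite addTb negbK.
  have ou : odd (sumn u).
    by move: (inMb_even ha); rewrite /= oddD /=; case: (odd (sumn u)).
  by move=> /(_ ou); rewrite pb.
Qed.

Definition st1 (r : seq nat) := r = [::] \/ exists r', r = 1 :: r'.

Lemma split2 x : fib_comp x -> exists l r, x = nseq l 2 ++ r /\ st1 r.
Proof.
elim: x => [|y x IH]; first by exists 0, [::]; split => //; left.
case/andP=> /orP[/eqP->|/eqP->] /IH[l [r [e h]]].
  by exists 0, (1 :: x); split => //; right; exists x.
by exists l.+1, r; rewrite e.
Qed.

Lemma nsb_nseq2 k b l r : nsb k b (nseq l 2 ++ r) = nsb k b r.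
Proof.
elim: l => //= l IH; rewrite addbF IH.
by rewrite orbT.
Qed.

Lemma prefix_nseq2 n j r : st1 r -> prefix (nseq n 2) (nseq j 2 ++ r) = (n <= j).
Proof.
move=> hr; elim: n j => [|n IH] [|j] //=; first by case: hr => [->|[r' ->]].
- by case: hr => [->|[r' ->]].
Qed.

Lemma prefix_P_block k j r : 1 <= k -> st1 r ->
  prefix (P k) (1 :: nseq j 2 ++ r) = (k - 1 <= j).
Proof. by move=> hk hr; rewrite /P prefix_cons eqxx prefix_nseq2. Qed.

Lemma fib_nseq2 l : fib_comp (nseq l 2).
Proof. by elim: l. Qed.

Lemma sumn_nseq2 l : sumn (nseq l 2) = (2 * l)%N.
Proof. by rewrite sumn_nseq. Qed.

Lemma tail_fwd k ps j : 1 <= k -> (forall p, p \in ps -> primeQ k p) ->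
  let r := flatten ps ++ 1 :: nseq j 2 in
  [/\ fib_comp r, odd (sumn r), nsb k true r & exists r', r = 1 :: r'].
Proof.
move=> hk; elim: ps => [|p ps IH] hps /=.
  split; rewrite ?nsb_nseq2 ?fib_nseq2 ?sumn_nseq2 //=; last by eexists.
  - by rewrite oddD oddM.
  - by rewrite -[nseq j 2]cats0 nsb_nseq2.
have [l [j' [hj' ep]]] : primeQ k p by apply: hps; rewrite mem_head.
case: IH => [q hq|f1 o1 n1 [r' e1]]; first by apply: hps; rewrite in_cons hq orbT.
rewrite -catA ep /=.
split; last by eexists.
- by rewrite -catA fib_comp_cat fib_nseq2 /= fib_comp_cat fib_nseq2 f1.
- move: o1; rewrite -catA !sumn_cat !sumn_nseq2 /= sumn_nseq2.
  rewrite sumn_nseq2 !oddD; by case: (odd l); case: (odd j); case: (odd j'); case: (odd (sumn _)).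
- rewrite -catA nsb_nseq2 /= nsb_nseq2 n1 andbT.
  rewrite e1 prefix_nseq2; last by right; eexists.
  rewrite -ltnNge; lia.
Qed.

Lemma tail_inv k r : 1 <= k -> fib_comp r -> odd (sumn r) -> nsb k true r ->
  (exists r', r = 1 :: r') ->
  exists ps j, (forall p, p \in ps -> primeQ k p) /\ r = flatten ps ++ 1 :: nseq j 2.
Proof.
move=> hk; have [n] := ubnP (size r); elim: n r => // n IH r hs hf ho hn [r0 er].
subst r; case/andP: hf => _ hf0.
have [l [rest [e0 [e1|[r1 e1]]]]] := split2 hf0; subst r0 rest.
  by exists [::], l; split => //; rewrite cats0.
move: (hf0 : fib_comp _); rewrite fib_comp_cat => /andP[_ /andP[_ hf1]].
have [j' [r2 [e2 h2]]] := split2 hf1; subst r1.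
move: ho hn; rewrite /= sumn_cat /= sumn_cat !sumn_nseq2.
rewrite nsb_nseq2 /= nsb_nseq2 => ho /andP[hp hn].
have or2 : odd (sumn r2).
  move: ho; rewrite !oddD; by case: (odd l); case: (odd j'); case: (odd (sumn r2)).
case: h2 => [e2|[r3 e3]]; first by rewrite e2 in or2.
have hj' : ~~ (k - 1 <= j').
  by move: hp; rewrite {1}e3 prefix_nseq2 //; right; exists r3.
have [ps [j [hps e]]] : exists ps j, (forall p, p \in ps -> primeQ k p) /\
    r2 = flatten ps ++ 1 :: nseq j 2.
  apply: IH => //; last by exists r3.
    move: hs; rewrite /= !size_cat /= size_nseq size_cat; lia.
  by move: (hf1 : fib_comp _); rewrite fib_comp_cat => /andP[].
exists ((1 :: nseq l 2 ++ 1 :: nseq j' 2) :: ps), j; split.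
  move=> p; rewrite in_cons => /orP[/eqP->|/hps//].
  exists l, j'; split => //; lia.
by rewrite /= e -!catA.
Qed.

Lemma primeM_irrb k p : 1 <= k -> primeM k p <-> irrb k p.
Proof.
move=> hk; split.
- case=> i [j [q [[ps [hps eq]] ep]]]; subst q p.
  have [f1 o1 n1 [r' e1]] := tail_fwd j hk hps.
  move: (flatten ps ++ 1 :: nseq j 2) f1 o1 n1 e1 => R f1 o1 n1 e1.
  rewrite /irrb /=; apply/andP; split.
    rewrite /inMb /=; apply/and3P; split.
    + by rewrite /= fib_comp_cat fib_nseq2 fib_comp_cat fib_nseq2 f1.
    + by rewrite /= !sumn_cat !sumn_nseq2 !oddD o1; case: (odd (k-1)); case: (odd i).
    + exact: prefix_prefix.
  by rewrite catA -nseqD nsb_nseq2.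
- case/and3P=> hne hM hn.
  have [s' es] := head_M hM hne; subst p.
  move: hM; rewrite /inMb => /orP[//|/and3P[hf ho hp]].
  case/andP: hf => _ hf.
  have [m [r [e hr]]] := split2 hf; subst s'.
  move: hp; rewrite /P prefix_cons eqxx prefix_nseq2 // => hm.
  move: hn; rewrite /= nsb_nseq2 => hn.
  move: ho; rewrite /= sumn_cat sumn_nseq2 !oddD => ho.
  have or : odd (sumn r).
    by move: ho; case: (odd m); case: (odd (sumn r)).
  case: hr => [er|[r0 er]]; first by rewrite er in or.
  move: (hf : fib_comp _); rewrite fib_comp_cat => /andP[_ fr].
  have [ps [j [hps e]]] := tail_inv hk fr or hn (ex_intro _ r0 er).
  exists (m - (k - 1))%N, j, (flatten ps); split; first by exists ps.
  by rewrite catA -nseqD subnKC // e.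
Qed.

Lemma catEq (a b c d : seq nat) : size a <= size c -> a ++ b = c ++ d ->
  exists w, c = a ++ w /\ b = w ++ d.
Proof.
elim: a c => [|x a IH] c; first by move=> _ /= ->; exists c.
case: c => [//|y c] /=.
by rewrite ltnS => h [-> e]; have [w [-> ->]] := IH _ h e; exists w.
Qed.

Lemma irr_ne k p : irreducible (inM k) p -> p <> [::].
Proof. by case=> _ []. Qed.

Lemma irr_M k p : irreducible (inM k) p -> inMb k p.
Proof. by case=> /inMP. Qed.

Lemma first_unique_aux k p1 t1 p2 t2 : 1 <= k -> size p1 <= size p2 ->
  irreducible (inM k) p1 -> irreducible (inM k) p2 -> inMb k t1 -> inMb k t2 ->
  p1 ++ t1 = p2 ++ t2 -> p1 = p2.
Proof.
move=> hk hs i1 i2 m1 m2 e; have [w [e2 e1]] := catEq hs e.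
have hw : inMb k w by apply: (lunit hk _ m2); rewrite -e1.
case: i2 => _ [_ H]; case: (H p1 w) => //.
- exact/inMP/irr_M.
- exact/inMP.
- by move=> h; case: (irr_ne i1).
- by move=> ew; rewrite e2 ew cats0.
Qed.

Lemma first_unique k p1 t1 p2 t2 : 1 <= k ->
  irreducible (inM k) p1 -> irreducible (inM k) p2 -> inMb k t1 -> inMb k t2 ->
  p1 ++ t1 = p2 ++ t2 -> p1 = p2.
Proof.
move=> hk i1 i2 m1 m2 e; case: (leqP (size p1) (size p2)) => hs.
  exact: (first_unique_aux hk hs i1 i2 m1 m2 e).
by apply/esym; apply: (first_unique_aux hk (ltnW hs) i2 i1 m2 m1).
Qed.

Lemma last_unique_aux k p1 t1 p2 t2 : 1 <= k -> size t1 <= size t2 ->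
  irreducible (inM k) p1 -> irreducible (inM k) p2 -> inMb k t1 -> inMb k t2 ->
  t1 ++ p1 = t2 ++ p2 -> p1 = p2.
Proof.
move=> hk hs i1 i2 m1 m2 e; have [w [e2 e1]] := catEq hs e.
have hw : inMb k w by apply: (lunit hk _ (irr_M i2)); rewrite -e1; exact: irr_M.
case: i1 => _ [_ H]; case: (H w p2) => //.
- exact/inMP.
- exact/inMP/irr_M.
- by move=> ew; rewrite e1 ew.
- by move=> h; case: (irr_ne i2).
Qed.

Lemma last_unique k p1 t1 p2 t2 : 1 <= k ->
  irreducible (inM k) p1 -> irreducible (inM k) p2 -> inMb k t1 -> inMb k t2 ->
  t1 ++ p1 = t2 ++ p2 -> p1 = p2 /\ t1 = t2.
Proof.
move=> hk i1 i2 m1 m2 e.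
have ep : p1 = p2.
  case: (leqP (size t1) (size t2)) => hs.
    exact: (last_unique_aux hk hs i1 i2 m1 m2 e).
  by apply/esym; apply: (last_unique_aux hk (ltnW hs) i2 i1 m2 m1).
split => //; subst p2.
have hs : size t1 = size t2 by move/(congr1 size): e; rewrite !size_cat; lia.
by move/eqP: e; rewrite eqseq_cat // => /andP[/eqP].
Qed.

Lemma flatten_M k ps : (forall p, p \in ps -> irreducible (inM k) p) ->
  inMb k (flatten ps).
Proof.
elim: ps => [//|p ps IH] H /=; apply: inMb_cat.
  by apply: irr_M; apply: H; rewrite mem_head.
by apply: IH => q hq; apply: H; rewrite in_cons hq orbT.
Qed.

Lemma factor_exists k s : inM k s -> exists ps,
  (forall p, p \in ps -> irreducible (inM k) p) /\ flatten ps = s.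
Proof.
have [n] := ubnP (size s); elim: n s => // n IH s hs hM.
case: (classic (exists a b, [/\ inM k a, inM k b, s = a ++ b, a <> [::] & b <> [::]])).
  case=> a [b [ha hb e na nb]].
  have sa : size a < n.
    move: hs; rewrite e size_cat; case: b nb {hb e} => // ? ? _; rewrite /=; lia.
  have sb : size b < n.
    move: hs; rewrite e size_cat; case: a na {ha e sa} => // ? ? _; rewrite /=; lia.
  have [pa [ha1 ha2]] := IH a sa ha.
  have [pb [hb1 hb2]] := IH b sb hb.
  exists (pa ++ pb); split; last by rewrite flatten_cat ha2 hb2.
  by move=> p; rewrite mem_cat => /orP[/ha1|/hb1].
move=> N.
case: (classic (s = [::])) => [->|ns]; first by exists [::].
exists [:: s]; split; last by rewrite /= cats0.
move=> p; rewrite mem_seq1 => /eqP ->; split => //; split => // a b ha hb e.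
case: (classic (a = [::])) => [|na]; first by left.
case: (classic (b = [::])) => [|nb]; first by right.
by case: N; exists a, b.
Qed.

Lemma factor_unique k ps ps' : 1 <= k ->
  (forall p, p \in ps -> irreducible (inM k) p) ->
  (forall p, p \in ps' -> irreducible (inM k) p) ->
  flatten ps = flatten ps' -> ps = ps'.
Proof.
move=> hk; elim: ps ps' => [|p ps IH] [|p' ps'] //= H H' e.
- by move: e (irr_ne (H' p' (mem_head _ _))); case: (p').
- by move: e (irr_ne (H p (mem_head _ _))); case: (p).
- have hp := H p (mem_head _ _); have hp' := H' p' (mem_head _ _).
  have ep : p = p'.
    apply: (first_unique hk hp hp' _ _ e); apply: flatten_M => q hq.
      by apply: H; rewrite in_cons hq orbT.
    by apply: H'; rewrite in_cons hq orbT.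
  subst p'; congr (_ :: _); apply: IH.
  + by move=> q hq; apply: H; rewrite in_cons hq orbT.
  + by move=> q hq; apply: H'; rewrite in_cons hq orbT.
  + by move/eqP: e; rewrite eqseq_cat // => /andP[_ /eqP].
Qed.

Lemma free_M k : 1 <= k -> free_monoid (inM k).
Proof.
move=> hk; split; first by left.
split; first by move=> a b /inMP ha /inMP hb; apply/inMP; apply: inMb_cat.
move=> s hs; have [ps [h1 h2]] := factor_exists hs.
exists ps; split => // ps' [h1' h2']; apply: (factor_unique hk h1 h1').
by rewrite h2 h2'.
Qed.

Fixpoint fibs (n : nat) : seq (seq nat) :=
  match n with
  | 0 => [:: [::]]
  | m.+1 => match m with
            | 0 => [:: [:: 1]]
            | p.+1 => map (cons 1) (fibs m) ++ map (cons 2) (fibs p)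
            end
  end.

Lemma fibsS n : fibs n.+2 = map (cons 1) (fibs n.+1) ++ map (cons 2) (fibs n).
Proof. by []. Qed.

Lemma mem_map_cons (x y : nat) s L : (x :: s \in map (cons y) L) = (x == y) && (s \in L).
Proof.
apply/mapP/andP => [[t ht [-> ->]]|[/eqP -> hs]]; first by split.
by exists s.
Qed.

Lemma nil_map_cons (y : nat) L : ([::] \in map (cons y) L) = false.
Proof. by apply/mapP => -[]. Qed.

Lemma mem_fibs n s : (s \in fibs n) = fib_comp s && (sumn s == n).
Proof.
elim: s n => [|x s IH] n.
  case: n => [|[|n]] //; by rewrite fibsS mem_cat !nil_map_cons.
case: n => [|[|n]].
- rewrite mem_seq1 /=; case: x => [//|x] /=.
  by rewrite andbF.
- rewrite /= mem_seq1 eqseq_cons.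
  case: x => [|[|[|x]]] //=; rewrite ?andbF //.
  case: s {IH} => [//|y s] /=; case: y => [//|y].
  have -> : (1 + (y.+1 + sumn s) == 1) = false by apply/eqP; lia.
  by rewrite andbF.
- rewrite fibsS mem_cat !mem_map_cons !IH.
  case: x => [|[|[|x]]] //=; rewrite ?andbF //.
  by rewrite orbF add1n eqSS.
Qed.

Lemma inj_cons (y : nat) : injective (cons y).
Proof. by move=> a b []. Qed.

Lemma uniq_fibs n : uniq (fibs n).
Proof.
suff : uniq (fibs n) /\ uniq (fibs n.+1) by case.
elim: n => [//|n [u1 u2]]; split => //.
rewrite fibsS cat_uniq !(map_inj_uniq (@inj_cons _)) u1 u2 /= andbT.
by apply/hasPn => s /mapP [t _ ->]; apply/mapP => -[t' _ []].
Qed.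

Lemma size_fibs n : size (fibs n) = fib n.+1.
Proof.
suff : size (fibs n) = fib n.+1 /\ size (fibs n.+1) = fib n.+2 by case.
elim: n => [//|n [u1 u2]]; split => //.
by rewrite fibsS size_cat !size_map u1 u2.
Qed.

Lemma count_pre1 u n : count (prefix (1 :: u)) (fibs n.+1) = count (prefix u) (fibs n).
Proof.
case: n => [//|n]; rewrite fibsS count_cat !count_map.
rewrite (@eq_count _ (preim (cons 2) _) pred0) ?count_pred0 ?addn0 //.
Qed.

Lemma count_pre2 u n : count (prefix (2 :: u)) (fibs n) =
  if 2 <= n then count (prefix u) (fibs (n - 2)) else 0.
Proof.
case: n => [//|[//|n]]; rewrite fibsS count_cat !count_map subn2 /=.
rewrite (@eq_count _ (preim (cons 1) _) pred0) ?count_pred0 //.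
Qed.

Lemma count_pre0 n : count (prefix [::]) (fibs n) = fib n.+1.
Proof.
by rewrite (@eq_count _ _ predT) ?count_predT ?size_fibs // => s; rewrite prefix0s.
Qed.

Lemma count_pren j m : count (prefix (nseq j 2)) (fibs m) =
  if (2 * j <= m)%N then fib (m - 2 * j).+1 else 0.
Proof.
elim: j m => [|j IH] m; first by rewrite count_pre0 subn0.
rewrite (_ : nseq j.+1 2 = 2 :: nseq j 2) // count_pre2; case: (leqP 2 m) => h.
  rewrite IH (_ : m - 2 - 2 * j = m - 2 * j.+1)%N; last by lia.
  have -> : (2 * j <= m - 2)%N = (2 * j.+1 <= m)%N by apply/idP/idP; lia.
  by [].
have -> : (2 * j.+1 <= m)%N = false by apply/negbTE; rewrite -ltnNge; lia.
by [].
Qed.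

Definition Gc k n := count (inMb k) (fibs n.*2).
Definition ac k n := count (irrb k) (fibs n.*2).

Lemma Gc_val k n : 1 <= k -> Gc k n =
  if n == 0 then 1 else if k <= n then fib (2 * (n - k) + 2) else 0.
Proof.
move=> hk; rewrite /Gc; case: n => [//|n].
rewrite (@eq_in_count _ _ (prefix (P k))); last first.
  move=> s; rewrite mem_fibs => /andP[f /eqP e]; rewrite /inMb f e /=.
  rewrite odd_double /=; case: s e {f} => //= x s _.
have -> : n.+1.*2 = (n.*2.+1).+1 by rewrite doubleS.
rewrite /P count_pre1 count_pren.
have -> : (2 * (k - 1) <= n.*2.+1)%N = (k <= n.+1)%N by apply/idP/idP; rewrite -muln2; lia.
case: ifP => // h; congr fib; rewrite -muln2; lia.
Qed.

Local Open Scope ring_scope.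

Lemma gfB_Gc k n : (1 <= k)%N -> gfB k n = (Gc k n)%:Z.
Proof.
move=> hk; rewrite Gc_val // /gfB; case: n => [|n] /=.
  by rewrite leqn0; case: (k =P 0) hk => [->//|].
by rewrite add0r; case: ifP.
Qed.

Local Open Scope nat_scope.

Lemma irrb_M k s : irrb k s -> inMb k s.
Proof. by case/and3P. Qed.

Lemma card_a k n : 1 <= k ->
  card_is (fun c => irreducible (inM k) c /\ sumn c = n.*2) (ac k n).
Proof.
move=> hk; exists (filter (irrb k) (fibs n.*2)); split; last split; last by rewrite size_filter.
  exact/filter_uniq/uniq_fibs.
move=> c; rewrite mem_filter mem_fibs irrP //; split.
  by case/and3P=> h _ /eqP.
case=> h e; rewrite h e eqxx andbT /=.
exact: (inMb_fib (irrb_M h)).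
Qed.

Lemma count_split (T : eqType) (a : pred T) (b : nat -> pred T) N (F : seq T) :
  (forall s, s \in F -> a s -> \sum_(i < N) b i s = 1) ->
  count a F = \sum_(i < N) count (fun s => a s && b i s) F.
Proof.
elim: F => [|x F IH] H /=; first by rewrite big1.
rewrite big_split /= IH; last by move=> s hs; apply: H; rewrite in_cons hs orbT.
congr (_ + _); case ha: (a x) => /=; last by rewrite big1.
by rewrite -(H x (mem_head _ _) ha); apply: eq_bigr => i _; case: (b i x).
Qed.

Definition Pw k i (s : seq nat) : bool :=
  has (fun j => [&& inMb k (take j s), irrb k (drop j s) & sumn (take j s) == i.*2])
      (iota 0 (size s).+1).

Lemma PwP k i s : reflect (exists t p, [/\ s = t ++ p, inMb k t, irrb k p & sumn t = i.*2])
  (Pw k i s).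
Proof.
apply: (iffP hasP).
  case=> j _ /and3P[h1 h2 /eqP h3]; exists (take j s), (drop j s).
  by rewrite cat_take_drop.
case=> t [p [e h1 h2 h3]]; exists (size t).
  by rewrite mem_iota e size_cat /=; lia.
by rewrite e take_size_cat // drop_size_cat // h1 h2 h3 eqxx.
Qed.

Lemma Pw_unique k i i' s : 1 <= k -> Pw k i s -> Pw k i' s -> i = i'.
Proof.
move=> hk /PwP[t [p [e h1 h2 h3]]] /PwP[t' [p' [e' h1' h2' h3']]].
have [_ et] := last_unique hk ((irrP _ hk).2 h2) ((irrP _ hk).2 h2') h1 h1'
  (etrans (esym e) e').
by apply: double_inj; rewrite -h3 -h3' et.
Qed.

Lemma Pw_exists k s : 1 <= k -> inMb k s -> s != [::] ->
  exists i, Pw k i s /\ i <= (sumn s)./2.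
Proof.
move=> hk hM hne; have [ps [H e]] := factor_exists ((inMP _ _).2 hM).
case/lastP: ps H e => [|ps p] H e; first by move: hne; rewrite -e.
have hp : irreducible (inM k) p by apply: H; rewrite mem_rcons mem_head.
have ht : inMb k (flatten ps).
  by apply: flatten_M => q hq; apply: H; rewrite mem_rcons in_cons hq orbT.
have es : s = flatten ps ++ p by rewrite -e -cats1 flatten_cat /= cats0.
have ev : ~~ odd (sumn (flatten ps)) by apply: inMb_even ht.
exists (sumn (flatten ps))./2; split.
  apply/PwP; exists (flatten ps), p; split => //; first by rewrite -(irrP _ hk).
  by rewrite -{1}(odd_double_half (sumn (flatten ps))) (negbTE ev) add0n.
by rewrite es sumn_cat; apply: half_leq; rewrite leq_addr.
Qed.

Lemma Pw_sum1 k n s : 1 <= k -> 1 <= n -> s \in fibs n.*2 -> inMb k s ->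
  \sum_(i < n.+1) Pw k i s = 1.
Proof.
move=> hk hn; rewrite mem_fibs => /andP[_ /eqP es] hM.
have hne : s != [::] by case: s es {hM} => //=; case: n hn.
have [i0 [h0 hi0]] := Pw_exists hk hM hne.
rewrite es doubleK in hi0.
rewrite (bigD1 (Ordinal (hi0 : i0 < n.+1))) //= h0 big1 // => j hj.
case hPj: (Pw k j s) => //; case/eqP: hj; apply/val_inj => /=.
exact: (Pw_unique hk hPj h0).
Qed.

Lemma count_Pw k n i : 1 <= k -> i <= n ->
  count (fun s => inMb k s && Pw k i s) (fibs n.*2) = Gc k i * ac k (n - i).
Proof.
move=> hk hi; rewrite -size_filter /Gc /ac -!size_filter -(size_allpairs cat).
apply/perm_size/uniq_perm.
- exact/filter_uniq/uniq_fibs.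
- apply: allpairs_uniq; try exact/filter_uniq/uniq_fibs.
  move=> [t p] [t' p'] /allpairsP[[t1 p1] [ht1 hp1 [-> ->]]]
    /allpairsP[[t2 p2] [ht2 hp2 [-> ->]]] /= e.
  move: ht1 hp1 ht2 hp2; rewrite !mem_filter => /andP[m1 _] /andP[i1 _] /andP[m2 _] /andP[i2 _].
  have [ep et] := last_unique hk ((irrP _ hk).2 i1) ((irrP _ hk).2 i2) m1 m2 e.
  by move: ep et => /= -> ->.
- move=> s; rewrite mem_filter; apply/andP/allpairsP.
  + case=> /andP[hM /PwP[t [p [e h1 h2 h3]]]]; rewrite mem_fibs => /andP[f /eqP hs].
    exists (t, p) => /=; split => //.
    * rewrite mem_filter h1 mem_fibs h3 eqxx andbT.
      by move: f; rewrite e fib_comp_cat => /andP[].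
    * rewrite mem_filter h2 mem_fibs.
      move: f hs; rewrite e fib_comp_cat sumn_cat h3 => /andP[_ ->] hs /=.
      apply/eqP; rewrite -!muln2 in hs *; lia.
  + case=> -[t p] /= [ht hp ->].
    move: ht hp; rewrite !mem_filter !mem_fibs => /and3P[h1 f1 /eqP s1] /and3P[h2 f2 /eqP s2].
    split.
      apply/andP; split; first by apply: inMb_cat => //; apply: irrb_M.
      by apply/PwP; exists t, p.
    rewrite fib_comp_cat f1 f2 sumn_cat s1 s2 /=.
    apply/eqP; rewrite -!muln2; lia.
Qed.

Lemma Gc_rec k n : 1 <= k -> 1 <= n ->
  Gc k n = \sum_(i < n.+1) Gc k i * ac k (n - i).
Proof.
move=> hk hn; rewrite {1}/Gc (@count_split _ _ (Pw k) n.+1).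
  by apply: eq_bigr => i _; rewrite count_Pw // -ltnS.
by move=> s hs hM; apply: Pw_sum1.
Qed.

Lemma ac0 k : ac k 0 = 0.
Proof. by []. Qed.

Local Open Scope ring_scope.

Lemma sum_delta (f : nat -> int) n c :
  \sum_(i < n.+1) f i * ((n - i)%N == c)%:R = if (c <= n)%N then f (n - c)%N else 0.
Proof.
have E (x : int) (b : bool) : x * b%:R = if b then x else 0.
  by case: b; rewrite ?mulr1 ?mulr0.
under eq_bigr => i _ do rewrite E.
rewrite -big_mkcond /=.
case: leqP => hc.
  rewrite (eq_bigl (fun i : 'I_n.+1 => (i : nat) == (n - c)%N)).
    by rewrite big_ord1_eq ltnS leq_subr.
  move=> i /=; have := ltn_ord i; rewrite ltnS => hi; apply/eqP/eqP; lia.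
rewrite big_pred0 // => i /=; apply/eqP; have := ltn_ord i; lia.
Qed.

Lemma id4 k n : (1 <= k)%N ->
  conv (gfB k) (fun i => (i == 0)%:R - (ac k i)%:Z) n = (n == 0)%:R.
Proof.
move=> hk; rewrite /conv.
under eq_bigr => i _ do rewrite mulrBr.
rewrite sumrB sum_delta leq0n subn0.
case: n => [|n].
  by rewrite big_ord_recr big_ord0 /= ac0 mulr0 add0r subr0 gfB_Gc.
have := Gc_rec hk (isT : (1 <= n.+1)%N) => h.
rewrite gfB_Gc // h -natz natr_sum.
rewrite (_ : \sum_(i < n.+2) gfB k i * (ac k (n.+1 - i))%:Z =
            \sum_(i < n.+2) ((Gc k i * ac k (n.+1 - i))%N)%:R).
  by rewrite subrr.
by apply: eq_bigr => i _; rewrite gfB_Gc // natrM !natz.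
Qed.

Lemma fib_id m : (fib m.+4 + fib m = 3 * fib m.+2)%N.
Proof.
have e4 : fib m.+4 = (fib m.+3 + fib m.+2)%N by [].
have e3 : fib m.+3 = (fib m.+2 + fib m.+1)%N by [].
have e2 : fib m.+2 = (fib m.+1 + fib m)%N by [].
lia.
Qed.

Lemma id3 k n : (1 <= k)%N ->
  conv (fun i => gfB k i - (i == 0)%:R) denom0 n = (n == k)%:R.
Proof.
move=> hk; pose h i : int := if (k <= i)%N then (fib (2 * (i - k) + 2))%:Z else 0.
rewrite /conv (eq_bigr (fun i : 'I_n.+1 => h i * denom0 (n - i))); last first.
  by move=> i _; rewrite /gfB addrAC subrr add0r.
rewrite /denom0.
under eq_bigr => i _ do rewrite mulrDr mulrBr mulrCA.
rewrite big_split sumrB /= -mulr_sumr !sum_delta leq0n subn0.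
rewrite /h; case: (leqP k n) => hkn; last first.
  have -> : (n == k) = false by apply/negbTE; rewrite neq_ltn hkn.
  have -> : (k <= n - 1)%N = false by apply/negbTE; rewrite -ltnNge; lia.
  have -> : (k <= n - 2)%N = false by apply/negbTE; rewrite -ltnNge; lia.
  by rewrite !if_same mulr0 subr0 addr0.
have [d ed] : exists d, n = (k + d)%N by exists (n - k)%N; lia.
subst n; rewrite addKn; clear hkn.
case: d => [|[|m]].
- rewrite addn0 eqxx.
  have -> : (k <= k - 1)%N = false by apply/negbTE; rewrite -ltnNge; lia.
  have -> : (k <= k - 2)%N = false by apply/negbTE; rewrite -ltnNge; lia.
  by rewrite !if_same mulr0 subr0 addr0.
- have -> : (k + 1 == k) = false by apply/negbTE; lia.
  have -> : (k + 1 - 1)%N = k by lia.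
  have -> : (k <= k + 1 - 2)%N = false by apply/negbTE; rewrite -ltnNge; lia.
  rewrite leqnn subnn !if_same addr0 ifT; last by lia.
  by [].
- have -> : (k + m.+2 == k) = false by apply/negbTE; lia.
  have -> : (k + m.+2 - 1 = k + m.+1)%N by lia.
  have -> : (k + m.+2 - 2 = k + m)%N by lia.
  rewrite !leq_addr !addKn ifT ?ifT; try lia.
  have := fib_id (2 * m + 2); rewrite (_ : (2 * m + 2).+4 = 2 * m.+2 + 2)%N; last by lia.
  rewrite (_ : (2 * m + 2).+2 = 2 * m.+1 + 2)%N; last by lia.
  move=> E; lia.
Qed.

Lemma conv_poly (f g : nat -> int) N n : (n < N)%N ->
  conv f g n = ((\poly_(i < N) f i) * (\poly_(i < N) g i))`_n.
Proof.
move=> hn; rewrite coefM /conv; apply: eq_bigr => i _.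
have := ltn_ord i; rewrite ltnS => hi.
rewrite !coef_poly ifT ?ifT //; lia.
Qed.

Lemma coef_cong (p q : {poly int}) N : (forall n, (n < N)%N -> p`_n = q`_n) ->
  exists r, p = q + 'X^N * r.
Proof.
move=> H; exists (drop_poly N (p - q)).
have ht : take_poly N (p - q) = 0.
  apply/polyP => i; rewrite coef_take_poly coef0 coefB.
  by case: ifP => // hi; rewrite H // subrr.
have := poly_take_drop N (p - q); rewrite ht add0r mulrC => ->.
by rewrite addrC subrK.
Qed.

Lemma coef_XN (q r : {poly int}) N n : (n < N)%N -> (q + 'X^N * r)`_n = q`_n.
Proof. by move=> hn; rewrite coefD coefXnM hn addr0. Qed.

Lemma id1 k n : (1 <= k)%N ->
  conv (fun i => (ac k i)%:Z) (denomk k) n = (n == k)%:R.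
Proof.
move=> hk; set N := (n + k + 3)%N.
set Gp := \poly_(i < N) gfB k i.
set Ap := \poly_(i < N) (ac k i)%:Z.
set Dp := \poly_(i < N) denom0 i.
have [r1 e1] : exists r1, Gp * (1 - Ap) = 1 + 'X^N * r1.
  apply: coef_cong => m hm.
  have -> : 1 - Ap = \poly_(i < N) ((i == 0)%:R - (ac k i)%:Z).
    apply/polyP => i; rewrite coef_poly coefB coef1 coef_poly.
    case: ifP => // hi; rewrite subr0; case: (i =P 0) => // ei; move: hi; rewrite ei.
    by rewrite /N; lia.
  by rewrite -conv_poly // id4 // coef1.
have [r2 e2] : exists r2, (Gp - 1) * Dp = 'X^k + 'X^N * r2.
  apply: coef_cong => m hm.
  have -> : Gp - 1 = \poly_(i < N) (gfB k i - (i == 0)%:R).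
    apply/polyP => i; rewrite coef_poly coefB coef1 coef_poly.
    case: ifP => // hi; rewrite sub0r; case: (i =P 0) => // ei; move: hi; rewrite ei.
    by rewrite /N; lia.
  by rewrite -conv_poly // id3 // coefXn.
have eD : \poly_(i < N) denomk k i = Dp + 'X^k.
  apply/polyP => i; rewrite coefD !coef_poly coefXn /denomk.
  case: ifP => // hi; rewrite add0r; case: (i =P k) => // ei; move: hi; rewrite ei.
  by rewrite /N; lia.
have hn : (n < N)%N by rewrite /N; lia.
rewrite (conv_poly _ _ hn) eD.
have -> : Ap * (Dp + 'X^k) = 'X^k + 'X^N * (r2 - r1 * Dp - r2 * Ap).
  apply/eqP; rewrite -subr_eq0.
  have -> : Ap * (Dp + 'X^k) - ('X^k + 'X^N * (r2 - r1 * Dp - r2 * Ap)) =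
    ((Gp - 1) * Dp - ('X^k + 'X^N * r2)) * (1 - Ap) -
    (Gp * (1 - Ap) - (1 + 'X^N * r1)) * Dp by ring.
  by rewrite e1 e2 !subrr !mul0r subr0.
by rewrite coef_XN // coefXn.
Qed.

Local Open Scope ring_scope.

Theorem proposition11 (k : nat) (hk : (1 <= k)%N) :
  free_monoid (inM k) /\
  (forall p, irreducible (inM k) p <-> primeM k p) /\
  exists a : nat -> nat,
    (forall n, card_is (fun c => irreducible (inM k) c /\ sumn c = n.*2) (a n)) /\
    (forall n, conv (fun i => (a i)%:Z) (denomk k) n = (n == k)%N%:R) /\
    (forall n, conv (fun i => gfB k i - (i == 0)%N%:R) denom0 n = (n == k)%N%:R) /\
    (forall n, conv (gfB k) (fun i => (i == 0)%N%:R - (a i)%:Z) n = (n == 0)%N%:R).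
Proof.
split; first exact: free_M.
split; first by move=> p; rewrite (irrP _ hk) primeM_irrb.
exists (ac k); split; first by move=> n; apply: card_a.
split; first by move=> n; apply: id1.
split; first by move=> n; apply: id3.
by move=> n; apply: id4.
Qed.
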